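(* If $n>2$ is even, then there exists more than one $\{1,\dots,n-1\}$-canonical element of $\mathrm{SU}(n)$.
   Context: For $\mathrm{SU}(n)$: $E_i$ is the $n\times n$ diagonal matrix with $(i,i)$ entry $\sqrt{-1}$, others $0$; $\mathfrak t=\{\sum a_iE_i:a_i\in\mathbb R,\sum a_i=0\}$; $H_i=\frac{n-i}{n}(E_1+\dots+E_i)-\frac{i}{n}(E_{i+1}+\dots+E_n)$, $i=1,\dots,n-1$. $\mathfrak I(\mathrm{SU}(n))=\{\sum a_iE_i\in\mathfrak t: a_i\in\mathbb Z\}$. $\mathfrak I'(\mathrm{SU}(n))$ is the set of elements of $\mathfrak I(\mathrm{SU}(n))$ of the form $\sum n_iH_i$ with all $n_i\ge0$. Partial order: $\sum n_iH_i\preceq\sum n_i'H_i$ iff $n_i'\le n_i$ for all $i$. For $I\subseteq\{1,\dots,n-1\}$, $\mathfrak C_I=\{\sum n_iH_i:n_i\ge0,\ n_j>0\iff j\in I\}$; an $I$-canonical element is a maximal element of $(\mathfrak I'(\mathrm{SU}(n))\cap\mathfrak C_I,\preceq)$. *)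

(* Defs.v *)
From HB Require Import structures.
From mathcomp Require Import all_boot all_order all_algebra.
Set Implicit Arguments. Unset Strict Implicit. Unset Printing Implicit Defensive.
Import Order.TTheory GRing.Theory Num.Theory.
Local Open Scope ring_scope.

(* An element  sum_i a_i E_i  of the Cartan subalgebra t of su(n) (the factor
   sqrt(-1) is implicit) is represented by its coefficient row vector
   a = (a_1,...,a_n) in 'rV[R]_n; entry j : 'I_n (0-based) is a_(j+1).
   R is an arbitrary real field (the paper uses the reals). *)

Section SU.
Variable R : realFieldType.
Variable n : nat.

Definition in_t (x : 'rV[R]_n) : Prop := \sum_(j < n) x 0 j = 0.

Definition H (i : nat) : 'rV[R]_n :=
  \row_(j < n) (if (j < i)%N then (n - i)%:R / n%:R else - (i%:R / n%:R)).

Definition combH (c : nat -> R) : 'rV[R]_n := \sum_(1 <= i < n) c i *: H i.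

Definition in_I (x : 'rV[R]_n) : Prop :=
  in_t x /\ exists z : 'I_n -> int, forall j, x 0 j = (z j)%:~R.

Definition in_I' (x : 'rV[R]_n) : Prop :=
  in_I x /\ exists c : nat -> R,
    (forall i, (1 <= i < n)%N -> 0 <= c i) /\ x = combH c.

Definition preceq (x y : 'rV[R]_n) : Prop :=
  exists c c' : nat -> R, x = combH c /\ y = combH c' /\
    forall i, (1 <= i < n)%N -> c' i <= c i.

(* the cone C_I, for I a subset of {1,...,n-1} (given as a predicate on nat,
   only its values on 1..n-1 matter) *)
Definition in_C (I : pred nat) (x : 'rV[R]_n) : Prop :=
  exists c : nat -> R, x = combH c /\
    forall j, (1 <= j < n)%N -> 0 <= c j /\ (0 < c j <-> I j).

Definition canonical (I : pred nat) (x : 'rV[R]_n) : Prop :=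
  (in_I' x /\ in_C I x) /\
  forall y, in_I' y -> in_C I y -> preceq x y -> y = x.

End SU.

Definition full_index_set (n : nat) : pred nat := fun j => (1 <= j < n)%N.

(* Main.v *)
Require Import Defs.
From HB Require Import structures.
From mathcomp Require Import all_boot all_order all_algebra.
From mathcomp Require Import zify ring lra.
Import Order.TTheory GRing.Theory Num.Theory.
Set Implicit Arguments. Unset Strict Implicit. Unset Printing Implicit Defensive.
Local Open Scope ring_scope.
Lemma H_entry (R : realFieldType) (n i : nat) (j : 'I_n) : (i < n)%N ->
  H R n i 0 j = (j < i)%:R - i%:R / n%:R.
Proof.
move=> lt_in; rewrite /H mxE.
have n0 : (n%:R : R) != 0 by rewrite pnatr_eq0; lia.
case: ifP => _; last by rewrite add0r.
rewrite natrB; last lia.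
by rewrite mulrBl divff // add0r.
Qed.

Lemma combH_entry (R : realFieldType) (n : nat) (c : nat -> R) (j : 'I_n) :
  combH n c 0 j = \sum_(1 <= i < n) c i * (j < i)%:R - (\sum_(1 <= i < n) c i * i%:R) / n%:R.
Proof.
rewrite /combH summxE mulr_suml -sumrB.
rewrite big_nat [RHS]big_nat; apply: eq_bigr => i /andP[_ lt].
by rewrite mxE H_entry // mulrBr mulrA.
Qed.

Lemma sum_lt (R : realFieldType) (n i : nat) : (i <= n)%N ->
  \sum_(j < n) ((j < i)%:R : R) = i%:R.
Proof.
move=> le; rewrite -natr_sum; congr (_%:R).
rewrite -(big_mkord xpredT (fun j => (j < i) : nat)).
rewrite (@big_cat_nat _ _ _ i 0 n) //= big_nat_cond.
rewrite (eq_bigr (fun _ => 1%N)); last by move=> k /andP[/andP[_ ->]].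
rewrite -big_nat_cond big_const_nat subn0 big_nat_cond big1 ?addn0.
  by elim: i {le} => //= i ->.
by move=> k /andP[/andP[h _] _]; rewrite ltnNge h.
Qed.

Lemma in_t_combH (R : realFieldType) (n : nat) (c : nat -> R) : in_t (combH n c).
Proof.
rewrite /in_t.
case: n c => [|n] c; first by rewrite big_ord0.
under eq_bigr do rewrite combH_entry.
rewrite sumrB -mulr_suml exchange_big /=.
have n0 : (n.+1%:R : R) != 0 by rewrite pnatr_eq0.
rewrite sumr_const card_ord -[_ *+ n.+1]mulr_natr mulfK //.
apply/eqP; rewrite subr_eq0; apply/eqP; rewrite big_nat [RHS]big_nat; apply: eq_bigr => i /andP[_ lt].
by rewrite -mulr_sumr sum_lt // ltnW.
Qed.

Lemma sum_ind (R : realFieldType) (n i : nat) (c : nat -> R) : (1 <= i < n)%N ->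
  \sum_(1 <= k < n) c k * (k == i)%:R = c i.
Proof.
move=> hi.
have -> : \sum_(1 <= k < n) c k * (k == i)%:R = \sum_(1 <= k < n | k == i) c k.
  by rewrite [RHS]big_mkcond; apply: eq_bigr => k _; case: (k == i); rewrite ?mulr1 ?mulr0.
by rewrite big_nat1_eq hi.
Qed.

Lemma coef_combH (R : realFieldType) (n : nat) (c : nat -> R) (i : nat) (j1 j2 : 'I_n) :
  (1 <= i < n)%N -> val j1 = i.-1 -> val j2 = i ->
  combH n c 0 j1 - combH n c 0 j2 = c i.
Proof.
move=> hi e1 e2; rewrite !combH_entry.
rewrite opprB addrA addrNK -sumrB -(sum_ind c hi) big_nat [RHS]big_nat.
apply: eq_bigr => k /andP[_ _]; rewrite -mulrBr; congr (_ * _).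
rewrite e1 e2; case: (ltngtP k i) => h.
- have h1 : (i.-1 < k)%N = false by apply/negbTE; rewrite -leqNgt; lia.
  have h2 : (i < k)%N = false by apply/negbTE; rewrite -leqNgt; lia.
  by rewrite h1 subrr.
- have h1 : (i.-1 < k)%N by lia.
  by rewrite h1 subrr.
- have h1 : (i.-1 < k)%N by lia.
  by rewrite h1 subr0.
Qed.

Lemma combH_ext (R : realFieldType) (n : nat) (a b : nat -> R) :
  (forall i, (1 <= i < n)%N -> a i = b i) -> combH n a = combH n b.
Proof.
move=> e; rewrite /combH big_nat [RHS]big_nat; apply: eq_bigr => i hi. by rewrite e.
Qed.

Lemma combH_inj (R : realFieldType) (n : nat) (a b : nat -> R) :
  combH n a = combH n b -> forall i, (1 <= i < n)%N -> a i = b i.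
Proof.
move=> e i hi.
have l1 : (i.-1 < n)%N by lia.
have l2 : (i < n)%N by lia.
rewrite -(@coef_combH _ _ a i (Ordinal l1) (Ordinal l2) hi) //.
by rewrite -(@coef_combH _ _ b i (Ordinal l1) (Ordinal l2) hi) // e.
Qed.

Lemma combH_last (R : realFieldType) (n : nat) (c : nat -> R) (j : 'I_n) :
  val j = n.-1 -> combH n c 0 j = - ((\sum_(1 <= i < n) c i * i%:R) / n%:R).
Proof.
move=> ej; rewrite combH_entry big_nat big1 ?sub0r //.
move=> i /andP[_ lt]; rewrite ej; have -> : (n.-1 < i)%N = false by lia.
by rewrite mulr0.
Qed.

Lemma intr_natz (R : realFieldType) (m : nat) : ((m%:Z)%:~R : R) = m%:R.
Proof. by []. Qed.

Lemma canon_nat (R : realFieldType) (n : nat) (f : nat -> nat) :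
  (0 < n)%N ->
  (forall i, (1 <= i < n)%N -> (0 < f i)%N) ->
  (n %| \sum_(1 <= i < n) i * f i)%N ->
  (forall g : nat -> nat, (forall i, (1 <= i < n)%N -> (0 < g i <= f i)%N) ->
     (n %| \sum_(1 <= i < n) i * g i)%N -> forall i, (1 <= i < n)%N -> g i = f i) ->
  canonical (full_index_set n) (combH n (fun i => (f i)%:R : R)).
Proof.
case: n => [//|n] _ fpos fdvd fmin.
have n0 : (n.+1%:R : R) != 0 by rewrite pnatr_eq0.
have sumE : forall g : nat -> nat,
    \sum_(1 <= i < n.+1) ((g i)%:R : R) * i%:R = (\sum_(1 <= i < n.+1) i * g i)%:R.
  by move=> g; rewrite natr_sum; apply: eq_bigr => i _; rewrite natrM mulrC.
split; first split.
- split; last by exists (fun i => (f i)%:R); split => // i _; exact: ler0n.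
  split; first exact: in_t_combH.
  exists (fun j : 'I_n.+1 => (\sum_(1 <= i < n.+1) f i * (j < i))%:Z
                             - ((\sum_(1 <= i < n.+1) i * f i) %/ n.+1)%:Z).
  have qE : ((\sum_(1 <= i < n.+1) i * f i)%:R / n.+1%:R : R)
            = ((\sum_(1 <= i < n.+1) i * f i) %/ n.+1)%:R.
    by rewrite -{1}(divnK fdvd) natrM mulfK.
  move=> j; rewrite combH_entry intrB !intr_natz sumE qE.
  by rewrite natr_sum; congr (_ - _); apply: eq_bigr => i _; rewrite natrM.
- exists (fun i => (f i)%:R); split => // j hj; split; first exact: ler0n.
  by rewrite ltr0n fpos.
move=> y [[_ [z hz]] _] [c3 [hy hc3]] [c1 [c2 [hx [hy2 hle]]]].
have e1 := combH_inj hx.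
have e2 := combH_inj (etrans (esym hy2) hy).
pose g i := `|z (inord i.-1) - z (inord i)|%N.
have hg : forall i, (1 <= i < n.+1)%N -> c2 i = (g i)%:R /\ (0 < g i <= f i)%N.
  move=> i hi.
  have h1 : (i.-1 <= n)%N by lia.
  have h2 : (i <= n)%N by lia.
  have ec : c2 i = (z (inord i.-1) - z (inord i))%:~R.
    have v1 : nat_of_ord (inord i.-1 : 'I_n.+1) = i.-1 by rewrite inordK //; lia.
    have v2 : nat_of_ord (inord i : 'I_n.+1) = i by rewrite inordK //; lia.
    rewrite -(@coef_combH _ _ c2 i (inord i.-1) (inord i) hi v1 v2).
    by rewrite -hy2 intrB -!hz.
  have pos : 0 < z (inord i.-1) - z (inord i).
    by rewrite -(ltr0z R) -ec e2 //; case: (hc3 i hi) => _ /iffRL; apply.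
  have eg : c2 i = (g i)%:R by rewrite ec /g -intr_natz gtz0_abs.
  split => //; apply/andP; split.
    by rewrite -(ltr0n R) -eg e2 //; case: (hc3 i hi) => _ /iffRL; apply.
  by rewrite -(ler_nat R) -eg e1 //; apply: hle.
have gdvd : (n.+1 %| \sum_(1 <= i < n.+1) i * g i)%N.
  have := hz ord_max.
  rewrite hy2 (combH_last _ (j:=ord_max)) //.
  have -> : \sum_(1 <= i < n.+1) c2 i * i%:R = \sum_(1 <= i < n.+1) ((g i)%:R : R) * i%:R.
    by rewrite big_nat [RHS]big_nat; apply: eq_bigr => i hi; case: (hg i hi) => ->.
  rewrite sumE => /eqP; rewrite eqr_oppLR => /eqP /(congr1 (fun x => x * n.+1%:R)).
  rewrite divfK // -(intr_natz R n.+1) -intrN -intrM -(intr_natz R (\sum_(1 <= i < n.+1) i * g i)) => /intr_inj eG.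
  by rewrite -[X in (_ %| X)%N]absz_nat eG abszM dvdn_mull.
have gf := fmin g (fun i hi => (hg i hi).2) gdvd.
rewrite hy2; apply: combH_ext => i hi.
by rewrite (hg i hi).1 gf // e1.
Qed.

Lemma tri_sum (n : nat) : ((\sum_(1 <= i < n) i) * 2 = n * n.-1)%N.
Proof.
elim: n => [|n IH]; first by rewrite big_geq.
case: n IH => [|n] IH; first by rewrite big_geq.
rewrite big_nat_recr //= mulnDl IH; lia.
Qed.

Lemma sum_ind_nat (n p X : nat) : (1 <= p < n)%N ->
  (\sum_(1 <= i < n) (i == p) * X = X)%N.
Proof.
move=> hp.
have -> : (\sum_(1 <= i < n) (i == p) * X = \sum_(1 <= i < n | i == p) X)%N.
  by rewrite [RHS]big_mkcond; apply: eq_bigr => i _; case: (i == p); rewrite ?mul1n.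
by rewrite big_nat1_eq hp.
Qed.

Lemma sum_pert (n p : nat) (g : nat -> nat) : (1 <= p < n)%N -> (0 < g p)%N ->
  (forall i, (1 <= i < n)%N -> i != p -> g i = 1%N) ->
  (\sum_(1 <= i < n) i * g i = \sum_(1 <= i < n) i + p * (g p).-1)%N.
Proof.
move=> hp gp hg.
rewrite -(sum_ind_nat (p * (g p).-1) hp) -big_split /= big_nat [RHS]big_nat.
apply: eq_bigr => i hi; case: (eqVneq i p) => [->|ne].
  rewrite mul1n; case: (g p) gp => // m _ /=; lia.
by rewrite hg // muln1 mul0n addn0.
Qed.

Lemma canon_pert (R : realFieldType) (n p t : nat) :
  (0 < n)%N -> (1 <= p < n)%N ->
  (n %| \sum_(1 <= i < n) i + p * t)%N ->
  (forall s, (s < t)%N -> ~~ (n %| \sum_(1 <= i < n) i + p * s)%N) ->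
  canonical (full_index_set n) (combH n (fun i => ((1 + (i == p) * t)%N)%:R : R)).
Proof.
move=> n0 hp hdvd hmin.
apply: canon_nat => //.
- have := @sum_pert n p (fun i => 1 + (i == p) * t)%N hp.
  rewrite eqxx mul1n => -> //.
  by move=> i _ /negbTE ->.
move=> g hg gdvd i hi.
have g1 : forall i, (1 <= i < n)%N -> i != p -> g i = 1%N.
  by move=> j hj ne; have := hg j hj; rewrite (negbTE ne) mul0n addn0; lia.
have gp := hg p hp; rewrite eqxx mul1n in gp.
case: (eqVneq i p) => [->|ne]; last by rewrite g1 // (negbTE ne).
rewrite mul1n.
rewrite (sum_pert hp _ g1) in gdvd; last lia.
case: (ltngtP (g p).-1 t) => h.
- by have := hmin _ h; rewrite gdvd.
- lia.
- lia.
Qed.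

Lemma ndvd (d q r : nat) : (0 < r < d)%N -> ~~ (d %| q * d + r)%N.
Proof.
move=> hr; rewrite dvdn_addr ?dvdn_mull //.
by apply/negP => /dvdn_leq h; have := h ltac:(lia); lia.
Qed.

Theorem mainTheorem12 (R : realFieldType) (n : nat) :
  (2 < n)%N -> ~~ odd n ->
  exists x y : 'rV[R]_n,
    canonical (full_index_set n) x /\ canonical (full_index_set n) y /\ x <> y.
Proof.
move=> n2 ev.
have nk : n = (n./2 * 2)%N by rewrite -{1}(odd_double_half n) (negbTE ev) add0n muln2.
set k := n./2 in nk.
have k2 : (2 <= k)%N by lia.
have T := tri_sum n.
set S := (\sum_(1 <= i < n) i)%N in T.
have SE : (\sum_(1 <= i < n) i = (k - 1) * n + k)%N.
  rewrite -/S; rewrite nk in T; rewrite nk.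
  have : (S * 2 = (k * 2) * (k * 2).-1)%N by [].
  nia.
have n0 : (0 < n)%N by lia.
exists (combH n (fun i => ((1 + (i == k) * 1)%N)%:R : R)).
exists (combH n (fun i => ((1 + (i == 1%N) * k)%N)%:R : R)).
split; [|split].
- apply: canon_pert => //; first lia.
  + rewrite SE muln1 nk; apply/dvdnP; exists k; lia.
  + move=> s; rewrite ltnS leqn0 => /eqP ->; rewrite muln0 addn0 SE.
    by apply: ndvd; lia.
- apply: canon_pert => //; first lia.
  + rewrite SE mul1n nk; apply/dvdnP; exists k; lia.
  + move=> s hs; rewrite SE mul1n -addnA; apply: ndvd; lia.
- move=> /combH_inj h; have := h 1%N ltac:(lia).
  have -> : (1 == k) = false by apply/negbTE; lia.
  rewrite eqxx => /eqP; rewrite eqr_nat; lia.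
Qed.
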